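(* Let $b>0$, $d\in\mathbb{N}^*$, and let $(G_n)_{n\ge0}$, $G_n=(V_n,E_n)$, be a $(b,d)$-expander. Let $c\in\,]0,1[$. There is a constant $q_1$, depending only on $d$, and there exists $q_2(c)\in\,]q_1,1[$ such that for any $\alpha\in\,]0,1[$, for all $n$ large enough, $p_{n,\alpha}(c)\in\,]q_1,q_2(c)[$. Furthermore, for any $c\in\,]0,1[$, there are strictly positive constants $C_1$ and $C_2$, depending only on $b$ and $d$, such that for every $n$ and every $p\geq q_2(c)$, \[ \mu_{n,p}\big(L_n^{(1)}\geq c|V_n|\big)\geq 1-C_1e^{-C_2\frac{|V_n|}{\log |V_n|}}. \]
   Context: For a finite graph $G=(V,E)$, $E(A,B)$ is the set of edges with one endpoint in $A$ and the other in $B$, and the Cheeger constant is $c(G)=\min_{A\subset V,\,0<|A|\le |V|/2} |E(A,A^c)|/|A|$. A $(b,d)$-expander is a sequence of finite graphs $G_n=(V_n,E_n)$ such that for every $n$ the maximal degree of $G_n$ is at most $d$ and $c(G_n)>b$, with $|V_n|\to\infty$. Configurations $x\in\{0,1\}^{E_n}$ are identified with the spanning subgraph of $G_n$ keeping exactly the edges $e$ with $x(e)=1$; $\mu_{n,p}$ is the product measure on $\{0,1\}^{E_n}$ under which each $x(e)$ is independently $1$ with probability $p$ and $0$ with probability $1-p$. $L_n^{(1)}(x)$ is the number of vertices of the largest connected component of the configuration $x$. For $c\in]0,1[$ and $\alpha\in[0,1]$, $p_{n,\alpha}(c)$ is the unique $p\in[0,1]$ such that $\mu_{n,p}(L_n^{(1)}\ge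 c|V_n|)=\alpha$. *)

(* Defs.v *)
From HB Require Import structures.
From mathcomp Require Import all_boot all_order all_algebra.
From mathcomp Require Import reals constructive_ereal sequences exp.
Set Implicit Arguments. Unset Strict Implicit. Unset Printing Implicit Defensive.
Import Order.TTheory GRing.Theory Num.Theory.
Local Open Scope ring_scope.

Definition is_graph (V : finType) (E : {set {set V}}) : Prop :=
  forall e, e \in E -> #|e| = 2%N.

Definition max_deg_le (V : finType) (E : {set {set V}}) (d : nat) : Prop :=
  forall v : V, (#|[set e in E | v \in e]| <= d)%N.

Definition boundary (V : finType) (E : {set {set V}}) (A : {set V}) : nat :=
  #|[set e in E | (e :&: A != set0) && (e :\: A != set0)]|.

(* Cheeger constant, min over A with 0 < |A| <= |V|/2 (empty min = +oo) *)
Definition cheeger (R : realType) (V : finType) (E : {set {set V}}) : \bar R :=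
  \big[Order.min/+oo%E]_(A : {set V} | (0 < #|A|)%N && (2 * #|A| <= #|V|)%N)
     (((boundary E A)%:R / (#|A|)%:R : R)%:E).
Arguments cheeger R {V} E.

Definition expander (R : realType) (b : R) (d : nat)
  (V : nat -> finType) (E : forall n, {set {set V n}}) : Prop :=
  [/\ forall n, is_graph (E n),
      forall n, max_deg_le (E n) d,
      forall n, (b%:E < cheeger R (E n))%E
    & forall M : nat, exists N : nat, forall n, (N <= n)%N -> (M <= #|V n|)%N].

Definition edge_t (V : finType) (E : {set {set V}}) := {e : {set V} | e \in E}.
Definition config (V : finType) (E : {set {set V}}) := {ffun edge_t E -> bool}.

Definition open_rel (V : finType) (E : {set {set V}}) (x : config E) : rel V :=
  fun u v => [exists e : edge_t E, [&& x e, u \in val e & v \in val e]].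

Definition comp (V : finType) (E : {set {set V}}) (x : config E) (u : V) : {set V} :=
  [set v | connect (open_rel x) u v].

Definition L1 (V : finType) (E : {set {set V}}) (x : config E) : nat :=
  \max_(u : V) #|comp x u|.

Definition mu (R : realType) (V : finType) (E : {set {set V}})
  (A : pred (config E)) (p : R) : R :=
  \sum_(x : config E | A x)
     p ^+ #|[set e | x e]| * (1 - p) ^+ #|[set e | ~~ x e]|.
Arguments mu {R V E} A p.

Definition giant (R : realType) (V : finType) (E : {set {set V}}) (c : R)
  : pred (config E) :=
  fun x => c * (#|V|)%:R <= (L1 x)%:R.
Arguments giant {R V} E c.

Definition is_crit (R : realType) (V : finType) (E : {set {set V}})
  (c alpha p : R) : Prop :=
  0 <= p <= 1 /\ mu (giant E c) p = alpha.
Arguments is_crit {R V} E c alpha p.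
Arguments expander {R} b d {V} E.

(* Main.v *)
Require Import Defs.
From HB Require Import structures.
From mathcomp Require Import all_boot all_order all_algebra.
From mathcomp Require Import reals constructive_ereal sequences exp.
From mathcomp Require Import zify ring lra.
Import Order.TTheory GRing.Theory Num.Theory.
Set Implicit Arguments. Unset Strict Implicit. Unset Printing Implicit Defensive.
Local Open Scope ring_scope.

Section Meas.
Variable R : realType.
Variables (V : finType) (E : {set {set V}}).
Local Notation cfg := (config E).
Local Notation ed := (edge_t E).

Definition bw (p : R) (b : bool) : R := if b then p else 1 - p.
Definition wt (p : R) (x : cfg) : R := \prod_(e : ed) bw p (x e).

Lemma mu_wt (A : pred cfg) (p : R) : mu A p = \sum_(x | A x) wt p x.
Proof.
apply: eq_bigr => x _; rewrite /wt (bigID (fun e => x e)) /=; symmetry.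
rewrite (eq_bigr (fun=> p)); last by move=> e ->.
rewrite [X in _ * X](eq_bigr (fun=> 1 - p)); last by move=> e /negbTE ->.
by rewrite !prodr_const !cardsE.
Qed.

Lemma wt_ge0 p x : 0 <= p <= 1 -> 0 <= wt p x.
Proof. move=> /andP[p0 p1]; apply: prodr_ge0 => e _; rewrite /bw; case: (x e) => //; lra. Qed.

Lemma sum_family (Q : ed -> pred bool) (p : R) :
  \sum_(x in family Q) wt p x = \prod_(e : ed) \sum_(j | Q e j) bw p j.
Proof. by rewrite bigA_distr_big_dep. Qed.

Lemma mu_closed (F : {set ed}) (p : R) :
  mu (fun x : cfg => [forall e in F, ~~ x e]) p = (1 - p) ^+ #|F|.
Proof.
rewrite mu_wt.
rewrite (eq_bigl (mem (family (fun e => if e \in F then pred1 false else predT)))); last first.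
  move=> x; rewrite inE /=; apply/forallP/familyP => H e; move: (H e);
  by case: (e \in F) => //=; case: (x e).
rewrite sum_family (bigID (mem F)) /=.
rewrite [X in _ * X]big1; last first.
  by move=> e /negbTE ->; rewrite big_bool /bw /=; ring.
rewrite mulr1 (eq_bigr (fun=> 1 - p)) ?prodr_const //.
move=> e ->; rewrite (big_pred1 false) //.
Qed.

Lemma mu_open (F : {set ed}) (p : R) :
  mu (fun x : cfg => [forall e in F, x e]) p = p ^+ #|F|.
Proof.
rewrite mu_wt.
rewrite (eq_bigl (mem (family (fun e => if e \in F then pred1 true else predT)))); last first.
  move=> x; rewrite inE /=; apply/forallP/familyP => H e; move: (H e);
  by case: (e \in F) => //=; case: (x e).
rewrite sum_family (bigID (mem F)) /=.
rewrite [X in _ * X]big1; last first.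
  by move=> e /negbTE ->; rewrite big_bool /bw /=; ring.
rewrite mulr1 (eq_bigr (fun=> p)) ?prodr_const //.
move=> e ->; rewrite (big_pred1 true) //.
Qed.

Lemma mu_total (p : R) : mu (fun _ : cfg => true) p = 1.
Proof.
have := mu_closed set0 p; rewrite cards0 expr0 => <-.
by apply: eq_bigl => x; apply/esym/forall_inP => e; rewrite inE.
Qed.

Lemma mu_compl (A : pred cfg) (p : R) : mu A p + mu (predC A) p = 1.
Proof. by rewrite -(mu_total p) /mu [X in _ = X](bigID A). Qed.

Lemma mu_ge0 (A : pred cfg) (p : R) : 0 <= p <= 1 -> 0 <= mu A p.
Proof. by move=> hp; rewrite mu_wt; apply: sumr_ge0 => x _; apply: wt_ge0. Qed.

Lemma mu_le (A B : pred cfg) (p : R) : 0 <= p <= 1 ->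
  (forall x, A x -> B x) -> mu A p <= mu B p.
Proof.
move=> hp hAB; rewrite !mu_wt [X in _ <= X](bigID A) /=.
rewrite (eq_bigl A); last by move=> x; case Ax: (A x); rewrite ?andbF ?andbT // hAB.
by rewrite lerDl; apply: sumr_ge0 => x _; apply: wt_ge0.
Qed.

Lemma mu_union (I : finType) (P : pred I) (B : I -> pred cfg) (A : pred cfg) (p : R) :
  0 <= p <= 1 -> (forall x, A x -> exists i, P i && B i x) ->
  mu A p <= \sum_(i | P i) mu (B i) p.
Proof.
move=> hp hA.
rewrite mu_wt (eq_bigr (fun i => \sum_(x | B i x) wt p x)); last by move=> i _; rewrite mu_wt.
under eq_bigr => i _ do rewrite big_mkcond.
rewrite exchange_big /= [X in X <= _]big_mkcond.
apply: ler_sum => x _; case: ifP => Ax; last first.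
  by apply: sumr_ge0 => i _; case: ifP => // _; apply: wt_ge0.
have [i /andP[Pi Bi]] := hA x Ax.
rewrite (bigD1 i) //= Bi lerDl.
by apply: sumr_ge0 => j _; case: ifP => // _; apply: wt_ge0.
Qed.

Definition increasing (A : pred cfg) :=
  forall x y : cfg, (forall e, x e -> y e) -> A x -> A y.

Section Coupling.
Variables (p s : R).
Definition Fp (j : bool * bool) : R := bw p j.1 * bw s j.2.
Definition W (g : {ffun ed -> bool * bool}) : R := \prod_e Fp (g e).

Lemma marg (phi : bool * bool -> bool) (z : cfg) :
  \sum_(g : {ffun ed -> bool * bool} | [ffun e => phi (g e)] == z) W g =
  \prod_e \sum_(j | phi j == z e) Fp j.
Proof.
rewrite bigA_distr_big_dep; apply: eq_bigl => g.
apply/eqP/familyP => [<- e|H]; first by rewrite unfold_in /= ffunE.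
by apply/ffunP => e; rewrite ffunE; apply/eqP; have := H e; rewrite unfold_in.
Qed.

Lemma marg_sum (phi : bool * bool -> bool) (A : pred cfg) :
  \sum_(z | A z) \prod_e \sum_(j | phi j == z e) Fp j =
  \sum_(g : {ffun ed -> bool * bool} | A [ffun e => phi (g e)]) W g.
Proof.
rewrite [RHS](partition_big (fun g : {ffun ed -> bool * bool} => [ffun e => phi (g e)]) A) //=.
apply: eq_bigr => z Az; rewrite -marg; apply: eq_bigl => g.
by case: eqP => [->|]; rewrite ?Az ?andbF ?andbT.
Qed.
End Coupling.

Lemma mu_strict (A : pred cfg) (p p' : R) : increasing A ->
  A [ffun=> true] -> ~~ A [ffun=> false] ->
  0 <= p -> p < p' -> p' <= 1 -> mu A p < mu A p'.
Proof.
move=> incA At Af p0 pp' p'1.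
have p1 : 1 - p != 0 by rewrite subr_eq0; apply/eqP => h; move: pp' p'1; rewrite -h; lra.
pose s := (p' - p) / (1 - p).
have s0 : 0 < s by rewrite /s divr_gt0 //; lra.
have s1 : s <= 1 by rewrite /s ler_pdivrMr; lra.
have e1 : forall q, mu A q = \sum_(z | A z) \prod_(e : ed) bw q (z e).
  by move=> q; rewrite mu_wt.
have h1 : mu A p = \sum_(g : {ffun ed -> bool * bool} | A [ffun e => (g e).1]) W p s g.
  rewrite -(marg_sum p s (fun j => j.1)) e1; apply: eq_bigr => z _.
  apply: eq_bigr => e _; rewrite (bigID (fun j : bool * bool => j.2)) /=.
  rewrite /Fp; case: (z e) => /=.
    rewrite (big_pred1 (true, true)); last by case=> [[] []].
    rewrite (big_pred1 (true, false)); last by case=> [[] []].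
    rewrite /bw /=; ring.
  rewrite (big_pred1 (false, true)); last by case=> [[] []].
  rewrite (big_pred1 (false, false)); last by case=> [[] []].
  rewrite /bw /=; ring.
have h2 : mu A p' = \sum_(g : {ffun ed -> bool * bool} | A [ffun e => (g e).1 || (g e).2]) W p s g.
  rewrite -(marg_sum p s (fun j => j.1 || j.2)) e1; apply: eq_bigr => z _.
  apply: eq_bigr => e _; rewrite /Fp; case: (z e) => /=.
    rewrite (bigD1 (true, true)) //= (bigD1 (true, false)) //= (bigD1 (false, true)) //=.
    rewrite big1; last by case=> [[] []].
    rewrite /bw /= /s; field => //.
  rewrite (big_pred1 (false, false)); last by case=> [[] []].
  rewrite /bw /= /s; field => //.
rewrite h1 h2 [X in _ < X](bigID (fun g : {ffun ed -> bool * bool} => A [ffun e => (g e).1])) /=.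
rewrite [X in _ < X + _](eq_bigl (fun g : {ffun ed -> bool * bool} => A [ffun e => (g e).1])); last first.
  move=> g; case Ag: (A [ffun e => (g e).1]); rewrite ?andbF ?andbT //.
  by apply: incA Ag => e; rewrite !ffunE => ->.
rewrite ltrDl.
pose g0 : {ffun ed -> bool * bool} := [ffun=> (false, true)].
have Wge0 : forall g, 0 <= W p s g.
  move=> g; apply: prodr_ge0 => e _; rewrite /Fp /bw; apply: mulr_ge0.
    by case: (g e).1 => //; lra.
  by case: (g e).2 => //; lra.
rewrite (bigD1 g0) /=; last first.
  have -> : [ffun e => (g0 e).1 || (g0 e).2] = [ffun=> true].
    by apply/ffunP => e; rewrite !ffunE.
  have -> : [ffun e => (g0 e).1] = [ffun=> false].
    by apply/ffunP => e; rewrite !ffunE.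
  by rewrite At Af.
apply: ltr_pwDl; last by apply: sumr_ge0 => g _; apply: Wge0.
apply: prodr_gt0 => e _; rewrite /Fp /bw ffunE /=; apply: mulr_gt0 => //; lra.
Qed.
End Meas.

Lemma card_setT_pow (T : finType) : #|{set T}| = (2 ^ #|T|)%N.
Proof. by rewrite -[LHS]cardsT -powersetT card_powerset cardsT. Qed.

Section Graph.
Variable R : realType.
Variables (V : finType) (E : {set {set V}}).
Local Notation cfg := (config E).
Local Notation ed := (edge_t E).

Definition closedb (x : cfg) (S : {set V}) :=
  [forall u, forall v, open_rel x u v ==> ((u \in S) == (v \in S))].

Lemma open_relC (x : cfg) u v : open_rel x u v = open_rel x v u.
Proof.
by apply/existsP/existsP => -[e /and3P[h1 h2 h3]]; exists e; rewrite h1 h2 h3.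
Qed.

Lemma closed_connect x S u v : closedb x S -> connect (open_rel x) u v ->
  (u \in S) = (v \in S).
Proof.
move=> /forallP cl /connectP [s pth ->]; elim: s u pth => //= w s IH u /andP[h pth].
rewrite -IH //; exact/eqP/(implyP (forallP (cl u) w) h).
Qed.

Lemma comp_closed x u : closedb x (Defs.comp x u).
Proof.
apply/forallP => a; apply/forallP => b; apply/implyP => hab; rewrite !inE.
apply/eqP; apply/idP/idP => h.
  by apply: connect_trans h (connect1 hab).
by apply: connect_trans h (connect1 _); rewrite open_relC.
Qed.

Lemma closedU x S T : closedb x S -> closedb x T -> closedb x (S :|: T).
Proof.
move=> /forallP h1 /forallP h2; apply/forallP => u; apply/forallP => v.
apply/implyP => huv; have /eqP := implyP (forallP (h1 u) v) huv.
have /eqP := implyP (forallP (h2 u) v) huv.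
by rewrite !inE => -> ->.
Qed.

Lemma closedC x S : closedb x S -> closedb x (~: S).
Proof.
move=> /forallP h1; apply/forallP => u; apply/forallP => v.
apply/implyP => huv; have /eqP := implyP (forallP (h1 u) v) huv.
by rewrite !inE => ->.
Qed.

Lemma comp_le_L1 (x : cfg) u : (#|Defs.comp x u| <= L1 x)%N.
Proof. exact: (leq_bigmax (F := fun u => #|Defs.comp x u|)). Qed.

Lemma split_closed (x : cfg) (c : R) : 0 < c < 1 ->
  (L1 x)%:R < c * #|V|%:R -> exists S, [/\ closedb x S,
     (1 - c) / 2 * #|V|%:R <= #|S|%:R & (2 * #|S| <= #|V|)%N].
Proof.
move=> /andP[c0 c1] hL.
set n := #|V| in hL *.
have n0 : 0 <= n%:R :> R by [].
pose P (S : {set V}) := closedb x S && ((#|S|%:R : R) <= (1 + c) / 2 * n%:R).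
have P0 : P set0.
  rewrite /P cards0; apply/andP; split; last by rewrite mulr_ge0 // divr_ge0 //; lra.
  by apply/forallP => u; apply/forallP => v; apply/implyP; rewrite !inE.
case: (@arg_maxnP _ set0 P (fun S => #|S|) P0).
move=> S /andP[clS hS] maxS.
have lowS : (1 - c) / 2 * n%:R <= #|S|%:R.
  rewrite leNgt; apply/negP => hlt.
  have : (#|S| < n)%N.
    rewrite -(ltr_nat R); apply: lt_le_trans hlt _.
    rewrite -[X in _ <= X]mul1r ler_wpM2r //; lra.
  move=> hSn.
  have /card_gt0P [u] : (0 < #|~: S|)%N by move: (cardsC S); rewrite -/n; lia.
  rewrite inE => uS.
  have disj : S :&: Defs.comp x u = set0.
    apply/setP => v; rewrite !inE; apply/negP => /andP[vS cuv].
    by have := closed_connect clS cuv; rewrite vS (negbTE uS).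
  have cardT : #|S :|: Defs.comp x u| = (#|S| + #|Defs.comp x u|)%N.
    by rewrite cardsU disj cards0 subn0.
  have ucomp : (1 <= #|Defs.comp x u|)%N.
    by apply/card_gt0P; exists u; rewrite inE connect0.
  have hc : (#|Defs.comp x u|%:R : R) < c * n%:R.
    apply: le_lt_trans hL; rewrite ler_nat; exact: comp_le_L1.
  have PT : P (S :|: Defs.comp x u).
    rewrite /P closedU ?comp_closed //= cardT natrD.
    apply/ltW; apply: (@lt_le_trans _ _ ((1 - c) / 2 * n%:R + c * n%:R)).
      exact: ltrD.
    rewrite -mulrDl ler_wpM2r //; lra.
  have := maxS _ PT; rewrite cardT; lia.
have [h2|h2] := leqP (2 * #|S|) n.
  by exists S.
exists (~: S); split; first exact: closedC.
  have e : #|~: S| = (n - #|S|)%N by rewrite /n -(cardsC S) addKn.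
  have Sn : (#|S| <= n)%N by rewrite /n -(cardsC S) leq_addr.
  rewrite e natrB // lerBrDr; apply: le_trans (lerD (lexx _) hS) _.
  rewrite -mulrDl; apply: le_trans (_ : 1 * n%:R <= _); last by rewrite mul1r.
  rewrite ler_wpM2r //; lra.
have e : #|~: S| = (n - #|S|)%N by rewrite /n -(cardsC S) addKn.
rewrite e; lia.
Qed.

Definition bdset (S : {set V}) : {set ed} :=
  [set e : ed | (val e :&: S != set0) && (val e :\: S != set0)].

Lemma bd_edge_closed (x : cfg) (S : {set V}) : closedb x S -> [forall e in bdset S, ~~ x e].
Proof.
move=> /forallP cl; apply/forall_inP => e; rewrite inE => /andP[].
move=> /set0Pn [u]; rewrite inE => /andP[ue uS].
move=> /set0Pn [v]; rewrite inE => /andP[vS ve].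
apply/negP => xe.
have h : open_rel x u v by apply/existsP; exists e; rewrite xe ue ve.
by have /eqP := implyP (forallP (cl u) v) h; rewrite uS (negbTE vS).
Qed.

Lemma card_bdset (S : {set V}) : #|bdset S| = boundary E S.
Proof.
rewrite /boundary -(card_imset _ val_inj); apply: eq_card => e.
rewrite [RHS]inE; apply/imsetP/idP.
  by move=> [e' ]; rewrite inE => h ->; rewrite (valP e') h.
move=> /andP[eE h]; exists (exist _ e eE) => //; by rewrite inE.
Qed.

Lemma cheeger_lt (b : R) (S : {set V}) : (b%:E < cheeger R E)%E -> (0 < #|S|)%N ->
  (2 * #|S| <= #|V|)%N -> b * #|S|%:R < (boundary E S)%:R.
Proof.
move=> hb S0 S2.
have := @bigmin_le_cond _ _ _ (+oo)%E S
  (fun A : {set V} => (0 < #|A|)%N && (2 * #|A| <= #|V|)%N)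
  (fun A => (((boundary E A)%:R / (#|A|)%:R : R)%:E)).
rewrite S0 S2 => /(_ isT) h.
have := lt_le_trans hb h; rewrite lte_fin ltr_pdivlMr ?ltr0n //.
Qed.

Lemma notgiant_bound (b c p : R) (K : nat) : (b%:E < cheeger R E)%E -> 0 < b ->
  0 < c < 1 -> 1 <= K%:R * (b * ((1 - c) / 2)) -> 1 - (4^-1)^+K <= p <= 1 ->
  mu (predC (giant E c)) p <= (2^-1)^+#|V|.
Proof.
move=> hb b0 hc hK /andP[pl p1].
set n := #|V|.
have q0 : 0 <= (4^-1 : R)^+K by rewrite exprn_ge0 // invr_ge0.
have q1 : (4^-1 : R)^+K <= 1 by rewrite exprn_ile1 // ?invr_ge0 ?invf_le1 //; lra.
have hp : 0 <= p <= 1 by apply/andP; split => //; lra.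
pose P (S : {set V}) := [&& (0 < #|S|)%N, (2 * #|S| <= n)%N & (1 - c) / 2 * n%:R <= #|S|%:R].
apply: le_trans (mu_union (P := P) (B := fun S (x : cfg) => [forall e in bdset S, ~~ x e]) hp _) _.
  move=> x; rewrite /predC /giant /= -ltNge => hx.
  have [S [clS h1 h2]] := split_closed hc hx.
  exists S; rewrite /P h2 h1 bd_edge_closed // !andbT.
  have n0 : (0 < n)%N.
    rewrite lt0n; apply/negP => /eqP n0; move: hx; rewrite -/n n0 mulr0.
    by rewrite ltNge ler0n.
  rewrite -(ltr_nat R); apply: lt_le_trans h1; apply: mulr_gt0; last by rewrite ltr0n.
  case/andP: hc => ??; apply: divr_gt0 => //; lra.
apply: (@le_trans _ _ (\sum_(S : {set V}) (4^-1 : R)^+n)).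
  rewrite [X in _ <= X](bigID P) /= -[X in X <= _]addr0; apply: lerD; last first.
    by apply: sumr_ge0 => ? _; rewrite exprn_ge0 // invr_ge0.
  apply: ler_sum => S /and3P[S0 S2 S3].
  rewrite mu_closed card_bdset.
  set k := boundary E S.
  have hk : (n <= K * k)%N.
    rewrite -(ler_nat R) natrM.
    have hbk := cheeger_lt hb S0 S2.
    apply: (@le_trans _ _ (K%:R * (b * ((1 - c) / 2)) * n%:R)).
      by rewrite -[X in X <= _]mul1r ler_wpM2r.
    rewrite -mulrA -mulrA ler_wpM2l // ; apply: ltW; apply: le_lt_trans hbk.
    by rewrite ler_wpM2l // ltW.
  apply: (@le_trans _ _ (((4^-1 : R)^+K)^+k)).
    apply: (@lerXn2r R k); rewrite ?qualifE /=; lra.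
  rewrite -exprM; apply: ler_wiXn2l => //; rewrite ?invr_ge0 ?invf_le1 //; lra.
rewrite sumr_const card_setT_pow -/n.
rewrite -[_ *+ _]mulr_natr natrX -exprMn; apply: (@lerXn2r R n); rewrite ?qualifE /=.
- by rewrite mulr_ge0 // invr_ge0.
- by rewrite invr_ge0.
- by rewrite (_ : 4^-1 * 2%:R = 2^-1 :> R) //; field.
Qed.
End Graph.

Section Lower.
Variable R : realType.
Variables (V : finType) (E : {set {set V}}) (d : nat).
Hypotheses (hg : is_graph E) (hdeg : max_deg_le E d).
Local Notation cfg := (config E).
Local Notation ed := (edge_t E).

Lemma two_set (e : {set V}) u v : #|e| = 2%N -> u \in e -> v \in e -> u != v ->
  e = [set u; v].
Proof.
move=> he ue ve uv; apply/eqP; rewrite eq_sym eqEcard; apply/andP; split.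
  by apply/subsetP => w; rewrite !inE => /orP[] /eqP ->.
by rewrite he cards2 uv.
Qed.

Definition adjE (u v : V) := (u != v) && ([set u; v] \in E).

Lemma open_edge (x : cfg) u v : open_rel x u v -> u != v ->
  exists ee : ed, val ee = [set u; v] /\ x ee.
Proof.
move=> /existsP [ee /and3P[xe ue ve]] uv; exists ee; split => //.
by apply: two_set => //; apply: hg; apply: (valP ee).
Qed.

Lemma open_adj (x : cfg) u v : open_rel x u v -> u != v -> adjE u v.
Proof.
move=> h uv; have [ee [e1 _]] := open_edge h uv.
by rewrite /adjE uv -e1 (valP ee).
Qed.

Lemma card_adj u : (#|[set v | adjE u v]| <= d)%N.
Proof.
have inj : {in [set v | adjE u v] &, injective (fun v => [set u; v])}.
  move=> v w; rewrite !inE => /andP[uv _] /andP[uw _] h.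
  have : v \in [set u; w] by rewrite -h !inE eqxx orbT.
  by rewrite !inE eq_sym (negbTE uv) => /eqP.
rewrite -(card_in_imset inj); apply: leq_trans (hdeg u); apply: subset_leq_card.
apply/subsetP => e /imsetP [v]; rewrite !inE => /andP[_ vE] ->.
by rewrite vE !inE eqxx.
Qed.

Lemma card_open_nb (x : cfg) w : (#|[set v | open_rel x w v]| <= d.+1)%N.
Proof.
apply: (@leq_trans #|w |: [set v | adjE w v]|).
  apply: subset_leq_card; apply/subsetP => v; rewrite !inE => h.
  by case: eqP => [->|/eqP wv] //=; rewrite eq_sym in wv; apply: open_adj h wv.
by rewrite cardsU1; have := card_adj w; case: (w \notin _) => /=; lia.
Qed.

Lemma card_bigcup_le (I : finType) (B : {pred I}) (f : I -> {set V}) :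
  (#|\bigcup_(i in B) f i| <= \sum_(i in B) #|f i|)%N.
Proof.
apply: (@big_ind2 _ _ (fun (S : {set V}) (k : nat) => is_true (#|S| <= k)%N)) => //.
- by rewrite cards0.
- move=> S1 k1 S2 k2 h1 h2; apply: leq_trans (leq_card_setU _ _) _; exact: leq_add.
Qed.

Fixpoint ball (x : cfg) (u : V) (r : nat) : {set V} :=
  if r is r'.+1 then ball x u r' :|: \bigcup_(w in ball x u r') [set v | open_rel x w v]
  else [set u].

Lemma card_ball (x : cfg) u r : (#|ball x u r| <= d.+2 ^ r)%N.
Proof.
elim: r => [|r IH] /=; first by rewrite cards1.
apply: leq_trans (leq_card_setU _ _) _.
apply: (@leq_trans (#|ball x u r| + #|ball x u r| * d.+1)).
  rewrite leq_add2l; apply: leq_trans (card_bigcup_le _ _) _.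
  rewrite -sum1_card big_distrl /=; apply: leq_sum => w _; rewrite mul1n.
  exact: card_open_nb.
rewrite expnS; move: IH; set k := #|_|; nia.
Qed.

Lemma ball_mono (x : cfg) u r r' : (r <= r')%N -> ball x u r \subset ball x u r'.
Proof.
move=> /subnKC <-; elim: (r' - r)%N => [|k IH]; first by rewrite addn0.
by rewrite addnS /=; apply: subset_trans IH (subsetUl _ _).
Qed.

Lemma path_ball (x : cfg) u s : path (open_rel x) u s -> last u s \in ball x u (size s).
Proof.
elim/last_ind: s => [|s v IH]; first by rewrite /= inE.
rewrite rcons_path last_rcons size_rcons => /andP[ps hv] /=.
rewrite inE; apply/orP; right; apply/bigcupP; exists (last u s); first exact: IH.
by rewrite inE.
Qed.

Lemma long_path (x : cfg) u L : (d.+2 ^ L < #|Defs.comp x u|)%N ->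
  exists s : seq V, [/\ size s = L, uniq (u :: s) & path (open_rel x) u s].
Proof.
move=> hL.
have : ~~ (Defs.comp x u \subset ball x u L).
  apply/negP => /subset_leq_card h; have := card_ball x u L; lia.
case/subsetPn => v; rewrite inE => /connectP [p pth ->] {v}.
case: (shortenP pth) => p' pth' uq _ hv.
have hs : (L < size p')%N.
  rewrite ltnNge; apply/negP => hle; move: hv; apply/negP; rewrite negbK.
  exact: (subsetP (ball_mono x u hle)) (path_ball pth').
exists (take L p'); split.
- by rewrite size_take hs.
- by have := take_uniq L.+1 uq.
- exact: take_path.
Qed.

Fixpoint pedges (u : V) (s : seq V) : seq {set V} :=
  if s is v :: s' then [set u; v] :: pedges v s' else [::].

Lemma size_pedges u s : size (pedges u s) = size s.
Proof. by elim: s u => //= v s IH u; rewrite IH. Qed.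

Lemma pedges_sub u s e w : e \in pedges u s -> w \in e -> w \in u :: s.
Proof.
elim: s u => //= v s IH u; rewrite inE => /orP[/eqP ->|h].
  by rewrite !inE => /orP[] ->; rewrite ?orbT.
by move=> /(IH _ h) hv; rewrite inE hv orbT.
Qed.

Lemma uniq_pedges u s : uniq (u :: s) -> uniq (pedges u s).
Proof.
elim: s u => //= v s IH u /andP[uvs /andP[vs us]].
rewrite IH ?vs ?us // andbT; apply/negP => /(pedges_sub (w := u)) h.
by have := h (setU11 _ _); move: uvs => /negP.
Qed.

Lemma pedges_open (x : cfg) u s : path (open_rel x) u s -> uniq (u :: s) ->
  forall e, e \in pedges u s -> exists ee : ed, val ee = e /\ x ee.
Proof.
elim: s u => //= v s IH u /andP[huv pth] /andP[uvs uq] e; rewrite inE => /orP[/eqP ->|].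
  by apply: open_edge => //; apply/negP => /eqP uv; move: uvs; rewrite uv inE eqxx.
exact: IH.
Qed.

Lemma pedges_E u s : path adjE u s -> forall e, e \in pedges u s -> e \in E.
Proof.
elim: s u => //= v s IH u /andP[/andP[_ huv] pth] e; rewrite inE => /orP[/eqP ->//|].
exact: IH.
Qed.

Lemma path_open_adj (x : cfg) u s : uniq (u :: s) -> path (open_rel x) u s -> path adjE u s.
Proof.
elim: s u => //= v s IH u /andP[uvs uq] /andP[huv pth].
rewrite IH // andbT; apply: (open_adj huv); apply/negP => /eqP uv.
by move: uvs; rewrite uv inE eqxx.
Qed.

Lemma count_walks L u :
  (\sum_(t : L.-tuple V | path adjE u t) 1 <= d ^ L)%N.
Proof.
elim: L u => [|L IH] u.
  rewrite sum1_card; apply: leq_trans (max_card _) _; by rewrite card_tuple.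
rewrite (reindex (fun p : V * L.-tuple V => cons_tuple p.1 p.2)) /=; last first.
  exists (fun t : L.+1.-tuple V => (thead t, behead_tuple t)).
    by move=> [v t] _ /=; congr pair; apply: val_inj.
  by move=> t _; apply: val_inj => /=; rewrite [in RHS](tuple_eta t).
rewrite -(pair_big_dep (fun v => adjE u v) (fun v (t : L.-tuple V) => path adjE v t) (fun _ _ => 1%N)).
rewrite /= expnS.
apply: (@leq_trans (\sum_(v | adjE u v) d ^ L)).
  by apply: leq_sum => v _; apply: IH.
by rewrite sum_nat_const; apply: leq_mul => //; rewrite -cardsE; apply: card_adj.
Qed.


Lemma mu_path (q : R) (u : V) (t : seq V) : 0 <= q <= 1 ->
  uniq (u :: t) -> path adjE u t ->
  mu (fun x : cfg => path (open_rel x) u t) q <= q ^+ size t.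
Proof.
move=> hq uq pa.
pose F := [set ee : ed | val ee \in pedges u t].
apply: le_trans (mu_le (B := fun x : cfg => [forall ee in F, x ee]) hq _) _.
  move=> x px; apply/forall_inP => ee; rewrite inE => hee.
  have [ee' [e1 xe']] := pedges_open px uq hee.
  by have <- : ee' = ee by apply: val_inj.
rewrite mu_open.
have -> : #|F| = size t.
  rewrite -(card_imset _ val_inj) -(size_pedges u t).
  have <- : #|pedges u t| = size (pedges u t) by apply/card_uniqP/uniq_pedges.
  apply: eq_card => e; apply/imsetP/idP => [[ee]|he].
    by rewrite inE => h ->.
  by exists (exist _ e (pedges_E pa he)) => //; rewrite inE.
exact: lexx.
Qed.

Lemma giant_small (c q : R) L : 0 <= q <= 1 ->
  (d.+2 ^ L)%:R < c * #|V|%:R ->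
  mu (giant E c) q <= #|V|%:R * (d%:R * q) ^+ L.
Proof.
move=> hq hL.
pose P (us : V * L.-tuple V) := uniq (us.1 :: us.2) && path adjE us.1 us.2.
pose B (us : V * L.-tuple V) (x : cfg) := path (open_rel x) us.1 us.2.
apply: le_trans (mu_union (P := P) (B := B) hq _) _.
  move=> x; rewrite /giant => hx.
  have [u hu] : exists u, (d.+2 ^ L < #|Defs.comp x u|)%N.
    case: (boolP [exists u, (d.+2 ^ L < #|Defs.comp x u|)%N]) => [/existsP //|/existsPn H].
    have : (L1 x <= d.+2 ^ L)%N by apply/bigmax_leqP => u _; rewrite leqNgt H.
    rewrite -(ler_nat R) => h; have := le_trans hx h; by rewrite leNgt hL.
  have [s [ss uq pth]] := long_path hu.
  have ht : size s == L by rewrite ss.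
  exists (u, Tuple ht); rewrite /P /B /= -andbA -[(u \notin s) && _]/(uniq (u :: s)) uq pth andbT /=.
  exact: path_open_adj pth.
apply: (@le_trans _ _ (\sum_(us | P us) q ^+ L)).
  apply: ler_sum => -[u t] /andP[/= uq pa].
  by have := mu_path hq uq pa; rewrite size_tuple.
apply: (@le_trans _ _ (\sum_(us : V * L.-tuple V | path adjE us.1 us.2) q ^+ L)).
  rewrite [X in _ <= X](bigID P) /= -[X in X <= _]addr0; apply: lerD.
    rewrite [X in _ <= X](eq_bigl P) //.
    by move=> us; rewrite /P; case: (path _ _ _); rewrite ?andbF ?andbT.
  by apply: sumr_ge0 => ? _; rewrite exprn_ge0 //; case/andP: hq.
rewrite -(pair_big_dep predT (fun v (t : L.-tuple V) => path adjE v t) (fun _ _ => q ^+ L)) /=.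
have q0 : 0 <= q by case/andP: hq.
apply: (@le_trans _ _ (\sum_(v : V) (d ^ L)%:R * q ^+ L)).
  apply: ler_sum => v _; rewrite sumr_const -[_ *+ #|_|]mulr_natl; apply: ler_wpM2r; first by rewrite exprn_ge0.
  rewrite ler_nat -sum1_card; exact: count_walks.
by rewrite sumr_const -[_ *+ _]mulr_natl natrX exprMn.
Qed.
End Lower.

Section Final.
Variable R : realType.

Definition poly_mu (V : finType) (E : {set {set V}}) (A : pred (config E)) : {poly R} :=
  \sum_(x | A x) \prod_(e : edge_t E) (if x e then 'X else 1 - 'X).

Lemma poly_muE (V : finType) (E : {set {set V}}) (A : pred (config E)) (t : R) :
  (poly_mu A).[t] = mu A t.
Proof.
rewrite mu_wt /poly_mu horner_sum; apply: eq_bigr => x _.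
rewrite horner_prod; apply: eq_bigr => e _; rewrite /bw.
by case: (x e); rewrite ?hornerX ?hornerE.
Qed.

Lemma giant_incr (V : finType) (E : {set {set V}}) (c : R) : increasing (giant E c).
Proof.
move=> x y hxy; rewrite /giant => h; apply: le_trans h _; rewrite ler_nat.
apply/bigmax_leqP => u _; apply: leq_trans (comp_le_L1 y u).
apply: subset_leq_card; apply/subsetP => v; rewrite !inE; apply: connect_sub.
move=> a b /existsP [e /and3P[xe ae be]]; apply: connect1; apply/existsP; exists e.
by rewrite (hxy _ xe) ae be.
Qed.

Lemma all_false_notgiant (V : finType) (E : {set {set V}}) (c : R) :
  1 < c * #|V|%:R -> ~~ giant E c [ffun=> false].
Proof.
move=> hc; rewrite /giant -ltNge; apply: le_lt_trans hc.
rewrite (_ : 1 = 1%:R) // ler_nat; apply/bigmax_leqP => u _.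
rewrite -(cards1 u); apply: subset_leq_card; apply/subsetP => v; rewrite inE => cuv; rewrite inE in cuv.
have cl : closedb ([ffun=> false] : config E) [set u].
  rewrite /closedb; apply/forallP => a; apply/forallP => b; apply/implyP => /existsP [e].
  by rewrite ffunE.
by have := closed_connect cl cuv; rewrite !inE eqxx => /esym ->.
Qed.

Lemma all_true_giant (V : finType) (E : {set {set V}}) (b c : R) :
  (b%:E < cheeger R E)%E -> 0 < b -> 0 < c < 1 -> giant E c [ffun=> true].
Proof.
move=> hb b0 hc; rewrite /giant leNgt; apply/negP => hx.
have [S [clS h1 h2]] := split_closed hc hx.
have n0 : (0 < #|V|)%N.
  rewrite lt0n; apply/negP => /eqP n0; move: hx; rewrite n0 mulr0.
  by rewrite ltNge ler0n.
have S0 : (0 < #|S|)%N.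
  rewrite -(ltr_nat R); apply: lt_le_trans h1; apply: mulr_gt0; last by rewrite ltr0n.
  case/andP: hc => ??; apply: divr_gt0 => //; lra.
have := cheeger_lt hb S0 h2; rewrite -card_bdset.
have -> : bdset E S = set0.
  apply/setP => e; rewrite in_set0; apply/negP => he.
  by have := forall_inP (bd_edge_closed clS) e he; rewrite ffunE.
rewrite cards0 ltNge; move/negP; apply; rewrite mulr_ge0 // ltW //.
Qed.

Lemma half_pow_le (n : nat) : (2^-1 : R) ^+ n <=
  expR (- (ln (2 : R)) ^+ 2 * (n%:R / ln n%:R)).
Proof.
case: n => [|[|n]].
- by rewrite expr0 mul0r mulr0 expR0.
- by rewrite ln1 invr0 !mulr0 expR0 expr1 invf_le1 //; lra.
have l2 : 0 < ln (2 : R) by apply: ln_gt0; lra.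
have ln2n : ln (2 : R) <= ln n.+2%:R.
  by rewrite ler_ln ?posrE ?ltr0n // ler_nat.
have lnn : 0 < ln (n.+2%:R : R) by apply: lt_le_trans ln2n.
have -> : (2^-1 : R) ^+ n.+2 = expR (- (ln 2 *+ n.+2)).
  by rewrite -lnXn ?expRN ?lnK ?posrE ?exprn_gt0 // exprVn; lra.
rewrite ler_expR mulNr lerN2.
set N : R := n.+2%:R in lnn ln2n *.
have -> : ln (2 : R) *+ n.+2 = ln 2 * N by rewrite /N mulr_natr.
have -> : ln (2 : R) ^+ 2 * (N / ln N) = (ln 2 * N) * (ln 2 / ln N) by rewrite expr2; ring.
apply: ler_piMr; first by rewrite mulr_ge0 // ?ltW // /N ler0n.
by rewrite ler_pdivrMr // mul1r.
Qed.
End Final.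

Section Arith.
Variable R : realType.

Lemma choose_L (c al : R) (d m nn : nat) : 0 < c -> 0 < al -> 2 < c * m%:R ->
  (m <= nn)%N -> 4 * m%:R ^+ 2 * (d.+2)%:R ^+ 2 / al < nn%:R ->
  exists L, (d.+2 ^ L)%:R < c * nn%:R /\
    nn%:R * (d%:R * ((d.+2 ^ 3)%:R)^-1) ^+ L < al.
Proof.
move=> c0 a0 cm mn hN.
have m0 : (0 < m)%N by rewrite lt0n; apply/negP => /eqP m0; move: cm; rewrite m0 mulr0; lra.
set D := d.+2.
set k := (nn %/ m)%N.
have k0 : (0 < k)%N by rewrite divn_gt0.
set L := trunc_log D k.
have D1 : (1 < D)%N by [].
have hk1 : (D ^ L <= k)%N by apply: trunc_logP.
have hk2 : (k < D ^ L * D)%N by rewrite -expnSr; apply: trunc_log_ltn.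
have hkm : (k * m <= nn)%N by apply: leq_trunc_div.
have hkm2 : (nn < k.+1 * m)%N by apply: ltn_ceil.
set A := (D ^ L)%N.
have A0 : (0 < A)%N by rewrite expn_gt0.
exists L; split.
  have h1 : (A * m <= nn)%N by apply: leq_trans hkm; rewrite leq_mul2r hk1 orbT.
  rewrite -(ler_nat R) natrM in h1.
  have hA : 1 <= A%:R :> R by rewrite (_ : 1 = 1%:R) // ler_nat.
  apply: lt_le_trans (_ : c * (A%:R * m%:R) <= _); last by rewrite ler_pM2l.
  nra.
have hnn : (nn < 2 * m * D * A)%N.
  apply: (leq_trans hkm2).
  have h : (k.+1 <= A * D)%N by [].
  apply: (@leq_trans (A * D * m)); first by rewrite leq_mul2r h orbT.
  nia.
have q1e : d%:R * ((D ^ 3)%:R)^-1 <= ((D%:R : R) ^+ 2)^-1.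
  apply: (@le_trans _ _ (D%:R * ((D ^ 3)%:R)^-1)).
    by rewrite ler_wpM2r ?invr_ge0 // ler_nat /D leqW.
  by rewrite natrX exprS invfM mulrA mulfV ?pnatr_eq0 // mul1r.
have q0 : 0 <= d%:R * ((D ^ 3)%:R : R)^-1 by rewrite mulr_ge0 // invr_ge0.
apply: (@le_lt_trans _ _ (nn%:R * ((D%:R : R) ^+ 2)^-1 ^+ L)).
  rewrite ler_wpM2l //; apply: lerXn2r; rewrite ?qualifE //=.
  by rewrite invr_ge0 exprn_ge0.
rewrite -exprVn -exprM mulnC exprM exprVn -natrX.
rewrite -/A.
have aA : 0 < A%:R :> R by rewrite ltr0n.
have n0 : (0 < nn)%N by apply: leq_trans mn.
have nn0 : 0 < nn%:R :> R by rewrite ltr0n.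
rewrite exprVn ltr_pdivrMr ?exprn_gt0 //.
have hnn' : nn%:R < 2 * m%:R * D%:R * A%:R :> R.
  by rewrite -(ltr_nat R) !natrM in hnn.
set X : R := 4 * m%:R ^+ 2 * D%:R ^+ 2.
have hX : X < al * nn%:R by rewrite mulrC -ltr_pdivrMr.
have hsq : nn%:R * nn%:R < X * A%:R ^+ 2.
  have -> : X * A%:R ^+ 2 = (2 * m%:R * D%:R * A%:R) * (2 * m%:R * D%:R * A%:R) by rewrite /X; ring.
  by apply: ltr_pM => //; apply: ltW.
have : nn%:R * nn%:R < nn%:R * (al * A%:R ^+ 2).
  apply: lt_le_trans hsq _.
  have -> : nn%:R * (al * A%:R ^+ 2) = (al * nn%:R) * A%:R ^+ 2 by ring.
  by rewrite ler_wpM2r ?exprn_ge0 ?ltW.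
by rewrite ltr_pM2l.
Qed.
End Arith.

Unset Implicit Arguments.

Theorem proposition3p1 (R : realType) (d : nat) (hd : (0 < d)%N) :
  exists q1 : R, 0 < q1 /\
  forall b : R, 0 < b ->
  exists C1 C2 : R, 0 < C1 /\ 0 < C2 /\
  forall (V : nat -> finType) (E : forall n, {set {set V n}}),
    expander b d E ->
  forall c : R, 0 < c < 1 ->
  exists q2 : R, q1 < q2 < 1 /\
    (forall alpha : R, 0 < alpha < 1 ->
       exists N : nat, forall n : nat, (N <= n)%N ->
         exists p : R, is_crit (E n) c alpha p
           /\ (forall p' : R, is_crit (E n) c alpha p' -> p' = p)
           /\ q1 < p < q2) /\
    (forall (n : nat) (p : R), q2 <= p <= 1 ->
       1 - C1 * expR (- C2 * ((#|V n|)%:R / ln (#|V n|)%:R))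
         <= mu (giant (E n) c) p).
Proof.
set D := d.+2.
set q1 : R := ((D ^ 3)%:R)^-1.
have q10 : 0 < q1 by rewrite invr_gt0 ltr0n expn_gt0.
have q1h : q1 <= 2^-1.
  rewrite /q1 lef_pV2 ?posrE ?ltr0n ?expn_gt0 // ler_nat /D !expnS expn0; nia.
exists q1; split => // b b0.
have l2 : 0 < ln (2 : R) by apply: ln_gt0; lra.
exists 1, (ln 2 ^+ 2); split; first exact: ltr01.
split; first by rewrite exprn_gt0.
move=> V E [hg hdeg hch hsz] c hc.
have hc' := hc; case/andP: hc' => c0 c1.
set beta := b * ((1 - c) / 2).
have beta0 : 0 < beta by rewrite mulr_gt0 // divr_gt0 //; lra.
set K := Num.Def.archi_bound beta^-1.
have hK0 : beta^-1 < K%:R by apply: archi_boundP; rewrite invr_ge0 ltW.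
have hK : 1 <= K%:R * beta.
  by apply: ltW; rewrite -ltr_pdivrMr // div1r.
have K1 : (1 <= K)%N.
  rewrite lt0n; apply/negP => /eqP K0; move: hK; rewrite K0 mul0r; lra.
set q2 : R := 1 - (4^-1) ^+ K.
have q4 : 0 < (4^-1 : R) ^+ K by rewrite exprn_gt0 // invr_gt0.
have q4' : (4^-1 : R) ^+ K <= 4^-1.
  by rewrite -[X in _ <= X]expr1; apply: ler_wiXn2l => //; rewrite ?invr_ge0 ?invf_le1 //; lra.
have q12 : q1 < q2 by rewrite /q2; lra.
have q21 : q2 < 1 by rewrite /q2; lra.
exists q2; split; first by rewrite q12 q21.
have upper : forall n (p : R), q2 <= p <= 1 ->
    1 - (2^-1) ^+ #|V n| <= mu (giant (E n) c) p.
  move=> n p hp.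
  have := notgiant_bound (hch n) b0 hc hK hp.
  have := mu_compl (giant (E n) c) p; lra.
split; last first.
  move=> n p hp; apply: le_trans (upper n p hp); rewrite mul1r lerB //.
  exact: half_pow_le.
move=> al /andP[a0 a1].
set m := Num.Def.archi_bound (2 / c).
have hm : 2 / c < m%:R by apply: archi_boundP; rewrite divr_ge0 // ltW.
have cm : 2 < c * m%:R by move: hm; rewrite ltr_pdivrMr // mulrC.
set N0 := Num.Def.archi_bound (4 * m%:R ^+ 2 * D%:R ^+ 2 / al).
have hN0 : 4 * m%:R ^+ 2 * D%:R ^+ 2 / al < N0%:R.
  apply: archi_boundP; apply: divr_ge0; last exact: ltW.
  by rewrite !mulr_ge0 // exprn_ge0.
set N1 := Num.Def.archi_bound ((1 - al)^-1).
have hN1 : (1 - al)^-1 < N1%:R by apply: archi_boundP; rewrite invr_ge0; lra.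
set N2 := Num.Def.archi_bound (c^-1).
have hN2 : c^-1 < N2%:R by apply: archi_boundP; rewrite invr_ge0 ltW.
have [Nsz hNsz] := hsz (maxn m (maxn N0 (maxn N1 N2))).
exists Nsz => n hn.
have hM := hNsz n hn.
set nn := #|V n| in hM *.
have hmn : (m <= nn)%N by apply: leq_trans hM; rewrite leq_maxl.
have hN0n : (N0 <= nn)%N by apply: leq_trans hM; rewrite (leq_trans _ (leq_maxr _ _)) ?leq_maxl.
have hN1n : (N1 <= nn)%N.
  by apply: leq_trans hM; rewrite (leq_trans _ (leq_maxr _ _)) // (leq_trans _ (leq_maxr _ _)) ?leq_maxl.
have hN2n : (N2 <= nn)%N.
  by apply: leq_trans hM; rewrite (leq_trans _ (leq_maxr _ _)) // (leq_trans _ (leq_maxr _ _)) ?leq_maxr.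
have hN : 4 * m%:R ^+ 2 * (d.+2)%:R ^+ 2 / al < nn%:R.
  by apply: lt_le_trans hN0 _; rewrite ler_nat.
have [L [hL hL2]] := choose_L c0 a0 cm hmn hN.
have hq1 : 0 <= q1 <= 1 by apply/andP; split; [exact: ltW| lra].
have F2 : mu (giant (E n) c) q1 < al.
  exact: le_lt_trans (giant_small (hg n) (hdeg n) hq1 hL) hL2.
have F1 : al < mu (giant (E n) c) q2.
  apply: lt_le_trans (upper n q2 _); last by rewrite lexx ltW.
  have h1 : (2^-1 : R) ^+ nn <= (nn.+1%:R)^-1.
    rewrite exprVn -natrX lef_pV2 ?posrE ?ltr0n ?expn_gt0 // ler_nat.
    exact: ltn_expl.
  have h2 : (nn.+1%:R : R)^-1 < 1 - al.
    have e : 1 - al = ((1 - al)^-1)^-1 by rewrite invrK.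
    rewrite [X in _ < X]e ltf_pV2 ?posrE ?ltr0n ?invr_gt0 //; last lra.
    by apply: lt_le_trans hN1 _; rewrite ler_nat; apply: leqW.
  have h3 := le_lt_trans h1 h2. change (al < 1 - (2^-1) ^+ nn). move: h3. set X := _ ^+ nn. move=> h3; clear -h3; lra.
have F3 : ~~ giant (E n) c [ffun=> false].
  apply: all_false_notgiant; rewrite mulrC -ltr_pdivrMr // div1r.
  by apply: lt_le_trans hN2 _; rewrite ler_nat.
have F4 : giant (E n) c [ffun=> true] by apply: all_true_giant (hch n) b0 hc.
have [p /andP[hp1 hp2] hroot] :
    exists2 p, q1 <= p <= q2 & root (poly_mu R (giant (E n) c) - al%:P) p.
  apply: poly_ivt; first exact: ltW.
  by rewrite !hornerE !poly_muE subr_le0 subr_ge0 !ltW.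
have hmu : mu (giant (E n) c) p = al.
  by move: hroot; rewrite /root !hornerE poly_muE subr_eq0 => /eqP.
exists p; split.
  by split => //; apply/andP; split; lra.
split.
  move=> p' [/andP[p'0 p'1] hp']; case: (ltgtP p' p) => // h.
    have := mu_strict (@giant_incr R _ (E n) c) F4 F3 p'0 h (_ : p <= 1); rewrite hp' hmu ltxx.
    by move=> /(_ ltac:(lra)).
  have := mu_strict (@giant_incr R _ (E n) c) F4 F3 (_ : 0 <= p) h p'1; rewrite hp' hmu ltxx.
  by move=> /(_ ltac:(lra)).
apply/andP; split.
  rewrite lt_neqAle hp1 andbT; apply/eqP => e; move: F2; rewrite e hmu; lra.
rewrite lt_neqAle hp2 andbT; apply/eqP => e; move: F1; rewrite -e hmu; lra.
Qed.
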